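(* For $n\ge 1$, the number of shallow $231$-avoiding involutions in $S_n$ equals $2^{n-1}$ (in fact every $231$-avoiding involution is shallow).
   Context: For $\pi\in S_n$: $D(\pi)=\sum_{i}|\pi_i-i|$, $I(\pi)$ is the number of inversions, $T(\pi)=n-\mathrm{cyc}(\pi)$ with $\mathrm{cyc}$ the number of cycles in the disjoint cycle decomposition; $\pi$ is shallow if $I(\pi)+T(\pi)=D(\pi)$. A permutation avoids a pattern $\sigma$ if it has no subsequence order-isomorphic to $\sigma$. An involution is a permutation with $\pi=\pi^{-1}$. *)

(* Defs.v *)
(* Permutations of {1..n} are modelled as 'S_n = {perm 'I_n}
   (values shifted to {0..n-1}; all statistics below are shift-invariant). *)
From mathcomp Require Import all_boot all_fingroup.
Set Implicit Arguments. Unset Strict Implicit. Unset Printing Implicit Defensive.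

Definition Dstat n (p : 'S_n) : nat :=
  \sum_(i < n) ((p i - i) + (i - p i))%N.

Definition Istat n (p : 'S_n) : nat :=
  #|[set ij : 'I_n * 'I_n | (ij.1 < ij.2) && (p ij.2 < p ij.1)]|.

Definition cyc n (p : 'S_n) : nat := #|porbits p|.

Definition Tstat n (p : 'S_n) : nat := (n - cyc p)%N.

Definition shallow n (p : 'S_n) : bool := (Istat p + Tstat p == Dstat p)%N.

(* A pattern is given as a sequence of distinct naturals (0-based one-line
   notation, e.g. 231 is [:: 1; 2; 0]).  p contains the pattern s if there is
   a subsequence p(f 0), ..., p(f (k-1)) with f strictly increasing, which is
   order-isomorphic to s. *)
Definition contains n (p : 'S_n) (s : seq nat) : bool :=
  [exists f : {ffun 'I_(size s) -> 'I_n},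
     [forall a : 'I_(size s), forall b : 'I_(size s),
        ((a < b) ==> (f a < f b)) &&
        ((p (f a) < p (f b)) == (nth 0 s a < nth 0 s b))]].

Definition avoids n (p : 'S_n) (s : seq nat) : bool := ~~ contains p s.

Definition pat231 : seq nat := [:: 1; 2; 0].

Definition involution n (p : 'S_n) : bool := (p^-1)%g == p.

(* Main.v *)
Require Import Defs.
From mathcomp Require Import all_boot all_fingroup zify.
Set Implicit Arguments. Unset Strict Implicit. Unset Printing Implicit Defensive.

Lemma cardsum (T : finType) (P : pred T) : #|[set x : T | P x]| = \sum_(x : T) (P x : nat).
Proof.
rewrite -sum1_card big_mkcond /=; apply: eq_bigr => x _; rewrite inE; by case: (P x).
Qed.

Lemma sum_range n lo hi : \sum_(j < n) ((lo <= j) && (j < hi) : nat) = minn n hi - lo.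
Proof.
elim: n => [|n IH]; first by rewrite big_ord0; lia.
rewrite big_ord_recr /= IH; case: (leqP lo n); case: (ltnP n hi) => /= *; lia.
Qed.

Section Inv.
Variable n : nat.
Variable p : 'S_n.
Hypothesis pp : forall i, p (p i) = i.

Lemma expp_inv k x : (p ^+ k)%g x = if odd k then p x else x.
Proof.
elim: k => [|k IH]; first by rewrite expg0 perm1.
by rewrite expgSr permM IH /=; case: (odd k) => //=; rewrite pp.
Qed.

Lemma porbit_inv i : porbit p i = [set i; p i].
Proof.
apply/setP => y; rewrite !inE; apply/porbitP/idP.
  by case=> k ->; rewrite expp_inv; case: (odd k); rewrite eqxx ?orbT.
case/orP=> /eqP ->; first by exists 0; rewrite expg0 perm1.
by exists 1; rewrite expg1.
Qed.

Lemma cyc_inv : cyc p = #|[set i : 'I_n | i <= p i]|.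
Proof.
rewrite /cyc /porbits.
have -> : porbit p @: 'I_n = porbit p @: [set i : 'I_n | i <= p i].
  apply/setP => O; apply/imsetP/imsetP => [[i _ ->]|[i _ ->]]; last by exists i.
  case: (leqP i (p i)) => h; first by exists i; rewrite ?inE.
  exists (p i); first by rewrite inE pp ltnW.
  by rewrite !porbit_inv pp setUC.
rewrite card_in_imset // => i j; rewrite !inE => hi hj e.
have : i \in porbit p j by rewrite -e porbit_inv !inE eqxx.
rewrite porbit_inv !inE => /orP[/eqP //|/eqP E].
apply: val_inj; move: hi hj; rewrite E pp => hi hj; apply/eqP; by rewrite eqn_leq hi hj.
Qed.

Lemma T_inv : Tstat p = \sum_(i < n) ((p i < i) : nat).
Proof.
rewrite /Tstat cyc_inv cardsum.
have : \sum_(i < n) ((i <= p i) : nat) + \sum_(i < n) ((p i < i) : nat) = n.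
  rewrite -big_split /= -[X in _ = X]card_ord -sum1_card.
  by apply: eq_bigr => i _; case: leqP.
by move=> H; rewrite -{1}H addKn.
Qed.
End Inv.

Ltac nlia := repeat match goal with H : context [nat_of_ord _] |- _ => revert H end;
  repeat match goal with |- context [@nat_of_ord ?n ?x] =>
    let y := fresh "y" in move: (@nat_of_ord n x) => y end; intros; lia.


Definition Rb n (p : 'S_n) : bool :=
  [forall i : 'I_n, forall j : 'I_n,
     ((i <= j <= p i) || (p i <= j <= i)) ==> (p j + j == i + p i)].

Section R.
Variable n : nat.
Variable p : 'S_n.
Hypothesis Rp : Rb p.

Lemma RP (i j : 'I_n) : (i <= j <= p i) || (p i <= j <= i) -> p j + j = i + p i.
Proof. by move=> h; apply/eqP; move/forallP: Rp => /(_ i)/forallP/(_ j)/implyP; apply. Qed.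

Lemma R_inv i : p (p i) = i.
Proof. apply: val_inj => /=. have h : p (p i) + p i = i + p i. apply (@RP i (p i)). rewrite !leqnn andbT /=. exact: leq_total. lia. Qed.

Lemma pw (a b pa pb : nat) :
  ((a <= b /\ b <= pa) \/ (pa <= b /\ b <= a) -> pb + b = a + pa) ->
  ((b <= a /\ a <= pb) \/ (pb <= a /\ a <= b) -> pa + a = b + pb) ->
  ((b <= pa /\ pa <= pb) \/ (pb <= pa /\ pa <= b) -> a + pa = b + pb) ->
  ((a < b) && (pb < pa) : nat) = ((a.+1 <= b) && (b < pa.+1) : nat) + (((pb.+1 <= a) && (a < b)) : nat).
Proof.
move=> h1 h2 h3.
case: (ltnP a b); case: (ltnP pb pa); case: (ltnP b pa.+1); case: (leqP pb.+1 a) => /= *; lia.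
Qed.

Lemma I_R : Istat p = \sum_(i < n) (p i - i) + \sum_(i < n) (i - (p i).+1).
Proof.
rewrite /Istat cardsum.
rewrite -(pair_big xpredT xpredT (fun i j : 'I_n => ((i < j) && (p j < p i) : nat))) /=.
transitivity (\sum_(i < n) \sum_(j < n) (((i.+1 <= j) && (j < (p i).+1) : nat) + (((p j).+1 <= i) && (i < j) : nat))).
  apply: eq_bigr => i _; apply: eq_bigr => j _.
  apply: pw; move=> H.
  - apply: (@RP i j); case: H => [[-> ->]|[-> ->]]; by rewrite ?orbT.
  - apply: (@RP j i); case: H => [[-> ->]|[-> ->]]; by rewrite ?orbT.
  - rewrite -{1}(R_inv i); apply: (@RP j (p i)); case: H => [[-> ->]|[-> ->]]; by rewrite ?orbT.
transitivity (\sum_(i < n) (\sum_(j < n) ((i.+1 <= j) && (j < (p i).+1) : nat) + \sum_(j < n) (((p j).+1 <= i) && (i < j) : nat))).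
  by apply: eq_bigr => i _; rewrite big_split.
rewrite big_split /=; congr (_ + _).
  apply: eq_bigr => i _; rewrite sum_range; have := ltn_ord (p i); lia.
rewrite exchange_big /=; apply: eq_bigr => j _; rewrite sum_range; have := ltn_ord j; lia.
Qed.
End R.


Lemma shallow_R n (p : 'S_n) : Rb p -> shallow p.
Proof.
move=> Rp; rewrite /shallow (I_R Rp) (T_inv (R_inv Rp)) /Dstat -!big_split /=; apply/eqP.
apply: eq_bigr => i _. case: (ltnP (p i) i) => /= h; nlia.
Qed.

Lemma involP n (p : 'S_n) : reflect (forall i, p (p i) = i) (involution p).
Proof.
apply: (iffP eqP) => [E i|H].
  by move: (permKV p i); rewrite E.
by apply/permP => i; rewrite -{1}(H i) permK.
Qed.

Definition o3 (k : nat) (h : k < 3) : 'I_(size pat231) := Ordinal h.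

Lemma contains231P n (p : 'S_n) :
  contains p pat231 <-> exists a b c : 'I_n, [/\ a < b, b < c, p c < p a & p a < p b].
Proof.
split.
  case/existsP => f /forallP H.
  have h01 := forallP (H (@o3 0 isT)) (@o3 1 isT).
  have h12 := forallP (H (@o3 1 isT)) (@o3 2 isT).
  have h20 := forallP (H (@o3 2 isT)) (@o3 0 isT).
  move: h01 h12 h20 => /andP[e1 /eqP e2] /andP[e3 /eqP e4] /andP[_ /eqP e6].
  move: e1 e2 e3 e4 e6; rewrite /= => e1 e2 e3 e4 e6.
  exists (f (@o3 0 isT)), (f (@o3 1 isT)), (f (@o3 2 isT)); split.
  - exact: e1.
  - exact: e3.
  - exact: e6.
  - exact: e2.
case=> a [b [c [ab bc pca pab]]].
apply/existsP; exists [ffun k : 'I_(size pat231) => if val k == 0 then a else if val k == 1 then b else c].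
apply/forallP => k; apply/forallP => l; rewrite !ffunE.
case: k l => [[|[|[|k]]] hk] [[|[|[|l]]] hl] //=; rewrite ?ltnn ?ab ?bc ?pca ?pab //=.
- by rewrite (ltn_trans ab bc) /= ltnNge (ltnW pca).
- by rewrite ltnNge (ltnW pab).
- by rewrite ltnNge (ltnW (ltn_trans pca pab)).
- by rewrite (ltn_trans pca pab).
Qed.


Lemma RP' n (p : 'S_n) (Rp : Rb p) (i j : 'I_n) :
  (i <= j /\ j <= p i) \/ (p i <= j /\ j <= i) -> p j + j = i + p i.
Proof. by move=> H; apply: (@RP _ _ Rp i j); case: H => [[-> ->]|[-> ->]]; rewrite ?orbT. Qed.

Arguments RP' {n p} Rp i j.

Lemma R_avoid n (p : 'S_n) : Rb p -> avoids p pat231.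
Proof.
move=> Rp; apply/negP => /contains231P [a [b [c [ab bc pca pab]]]].
have e1 := RP' Rp a b. have e2 := RP' Rp c a. have e3 := RP' Rp c b.
have e4 := RP' Rp a (p c). rewrite (R_inv Rp) in e4.
nlia.
Qed.

Lemma R_invol n (p : 'S_n) : Rb p -> involution p.
Proof. by move=> Rp; apply/involP; apply: R_inv. Qed.

Section AvInv.
Variable n : nat.
Variable p : 'S_n.
Hypothesis av : avoids p pat231.
Hypothesis pp : forall i, p (p i) = i.

Lemma no231 (a b c : 'I_n) : a < b -> b < c -> p c < p a -> p a < p b -> False.
Proof. move=> *; move/negP: av; apply; apply/contains231P; by exists a, b, c. Qed.

Lemma no312 (a b c : 'I_n) : a < b -> b < c -> p b < p c -> p c < p a -> False.
Proof. move=> ab bc h1 h2; apply: (@no231 (p b) (p c) (p a)) => //; by rewrite !pp. Qed.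

Lemma pinj (a b : 'I_n) : (p a : nat) = p b -> (a : nat) = b.
Proof. by move=> /val_inj/perm_inj ->. Qed.

Lemma inside (i j : 'I_n) : i < j -> j < p i -> i < p j /\ p j < p i.
Proof.
move=> ij jm.
have h1 := @pinj j (p i). have h2 := @pinj j i.
have P' : (p (p i) : nat) = i by rewrite pp.
have N1 := @no312 i j (p i). have N2 := @no231 i j (p i).
rewrite pp in h1. nlia.
Qed.

Lemma decr (i j k : 'I_n) : i <= j -> j < k -> k <= p i -> p k < p j.
Proof.
move=> ij jk km.
have F1 := @inside i j. have F2 := @inside i k.
have N := @no312 i j k. have I1 := @pinj j k.
have P := pp i.
have P' : (p (p i) : nat) = i by rewrite P.
have C1 : (j:nat) = i -> (p j:nat) = p i by move/val_inj->.
have C2 : (k:nat) = p i -> (p k:nat) = i by move/val_inj->; rewrite P.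
nlia.
Qed.
End AvInv.

Definition pf n (p : 'S_n) (i : nat) : nat := if insub i is Some o then val (p o) else i.
Lemma pfE n (p : 'S_n) (o : 'I_n) : pf p o = p o. Proof. by rewrite /pf valK. Qed.

Lemma dec_bound (g : nat -> nat) i m :
  (forall j k, i <= j -> j < k -> k <= m -> g k < g j) ->
  forall j, i <= j -> j <= m -> g m + (m - j) <= g j /\ g j + (j - i) <= g i.
Proof.
move=> D j ij jm; split.
  have: forall d j, i <= j -> j + d = m -> g m + d <= g j.
    elim=> [|d IH] j' ij' e; first by rewrite addn0 in e; subst; lia.
    have h1 := IH j'.+1. have h2 := D j' j'.+1. lia.
  move/(_ (m - j) j ij); lia.
have: forall d, i + d <= m -> g (i + d) + d <= g i.
  elim=> [|d IH] e; first by rewrite !addn0.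
  have h1 := D (i + d) (i + d).+1. have h2 := IH. have -> : i + d.+1 = (i + d).+1 by lia. lia.
move/(_ (j - i)). have -> : i + (j - i) = j by lia. lia.
Qed.

Lemma avinv_R n (p : 'S_n) : avoids p pat231 -> involution p -> Rb p.
Proof.
move=> av /involP pp.
have main : forall i j : 'I_n, i <= j -> j <= p i -> p j + j = i + p i.
  move=> i j ij jm.
  have D : forall x y, i <= x -> x < y -> y <= p i -> pf p y < pf p x.
    move=> x y ix xy ym.
    have yn : y < n by exact: leq_ltn_trans ym (ltn_ord _).
    have xn : x < n by exact: ltn_trans xy yn.
    have := @decr n p av pp i (Ordinal xn) (Ordinal yn) ix xy ym.
    by rewrite -!(pfE p (Ordinal _)).
  have [h1 h2] := dec_bound D ij jm.
  move: h1 h2; rewrite !pfE pp; nlia.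
apply/forallP => i; apply/forallP => j; apply/implyP => /orP[/andP[a b]|/andP[a b]].
  by apply/eqP; apply: main.
apply/eqP; have := main (p i) j a; rewrite pp => /(_ b); nlia.
Qed.


Section Block.
Variable n : nat.
Variable C : {set 'I_n.-1}.

Definition cutb (c : nat) : bool := (n <= c.+1) || [exists x in C, val x == c].
Fixpoint nxt k i := if k is k'.+1 then (if cutb i then i else nxt k' i.+1) else i.
Fixpoint st i := if i is i'.+1 then (if cutb i' then i else st i') else 0.
Definition en i := nxt n i.

Lemma nxt_ge k i : i <= nxt k i.
Proof. elim: k i => [|k IH] i //=; case: (cutb i) => //; exact: ltnW (IH _). Qed.

Lemma nxt_nocut k i j : i <= j -> j < nxt k i -> ~~ cutb j.
Proof.
elim: k i => [|k IH] i /=; first by lia.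
case E: (cutb i); first by lia.
move=> ij jn; case: (ltngtP i j) ij => // [lt|eq] _; first exact: IH lt jn.
by rewrite -eq E.
Qed.

Lemma nxt_cut k i : cutb (i + k) -> cutb (nxt k i).
Proof.
elim: k i => [|k IH] i /=; first by rewrite addn0.
case E: (cutb i); first by rewrite E.
by move=> h; apply: IH; rewrite addSnnS.
Qed.

Lemma st_le i : st i <= i.
Proof. elim: i => [|i IH] //=; case: (cutb i) => //; exact: leqW. Qed.

Lemma st_start i : st i = 0 \/ cutb (st i).-1.
Proof. elim: i => [|i IH] /=; first by left. case E: (cutb i) => //=; by right. Qed.

Lemma st_nocut i j : st i <= j -> j < i -> ~~ cutb j.
Proof.
elim: i => [|i IH] /=; first by lia.
case E: (cutb i); first by lia.
move=> sj ji; case: (ltngtP j i) ji => [lt|gt|eq] ji; [exact: IH | exfalso; lia | by rewrite eq E].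
Qed.

Lemma en_cut i : cutb (en i).
Proof. apply: nxt_cut; rewrite /cutb; apply/orP; left; lia. Qed.

Lemma en_ge i : i <= en i.
Proof. exact: nxt_ge. Qed.

Lemma en_min i c : i <= c -> cutb c -> en i <= c.
Proof. move=> ic cc; rewrite leqNgt; apply/negP => h. by move: (nxt_nocut ic h); rewrite cc. Qed.

Lemma en_lt i : i < n -> en i < n.
Proof.
move=> h; have := @en_min i n.-1; rewrite /cutb.
have -> : n <= n.-1.+1 by lia.
move=> /(_ _ isT); lia.
Qed.

Lemma blk_same i j : st i <= j -> j <= en i -> st j = st i /\ en j = en i.
Proof.
move=> sj je.
have ij_nocut : forall x, st i <= x -> x < en i -> ~~ cutb x.
  move=> x sx xe; case: (ltnP x i) => xi; first exact: (@st_nocut i x sx xi).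
  exact: (@nxt_nocut n i x xi xe).
split.
  have h1 := st_le j. have h2 := st_start j. have h3 := st_start i.
  case: (ltngtP (st j) (st i)) => // [lt|gt].
  - case: h3 => [h|h]; first by lia.
    suff: ~~ cutb (st i).-1 by rewrite h.
    apply: (@st_nocut j); lia.
  - case: h2 => [h|h]; first by lia.
    suff: ~~ cutb (st j).-1 by rewrite h.
    apply: ij_nocut; lia.
apply/eqP; rewrite eqn_leq; apply/andP; split.
  apply: en_min => //; exact: en_cut.
rewrite leqNgt; apply/negP => lt.
suff: ~~ cutb (en j) by rewrite en_cut.
apply: ij_nocut => //; have := en_ge j; lia.
Qed.

Definition bf i := st i + en i - i.

Lemma bf_range i : st i <= bf i /\ bf i <= en i.
Proof. have := st_le i; have := en_ge i; rewrite /bf; lia. Qed.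

Lemma bf_lt i : i < n -> bf i < n.
Proof. move=> h; have := en_lt h; have := bf_range i; lia. Qed.

Lemma bf_inv i : bf (bf i) = i.
Proof.
have [h1 h2] := bf_range i.
have [e1 e2] := blk_same h1 h2.
have := st_le i; have := en_ge i.
rewrite {1 2}/bf e1 e2 /bf; lia.
Qed.

Definition bo (i : 'I_n) : 'I_n := Ordinal (bf_lt (ltn_ord i)).
Lemma bo_K : involutive bo.
Proof. by move=> i; apply: val_inj; rewrite /= bf_inv. Qed.

Definition blk : 'S_n := perm (can_inj bo_K).
Lemma blkE i : (blk i : nat) = bf i.
Proof. by rewrite /blk permE. Qed.

End Block.

Lemma blk_nocut n C i x : st C i <= x -> x < @en n C i -> ~~ cutb C x.
Proof.
move=> sx xe; case: (ltnP x i) => xi; first exact: (@st_nocut n C i x sx xi).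
exact: (@nxt_nocut n C n i x xi xe).
Qed.


Definition cuts n (p : 'S_n) : {set 'I_n.-1} :=
  [set c : 'I_n.-1 | (pf p c <= c) && (c < pf p c.+1)].

Lemma pf_lt n (p : 'S_n) x (h : x < n) : pf p x = p (Ordinal h).
Proof. by rewrite -(pfE p (Ordinal h)). Qed.

Lemma pf_ltn n (p : 'S_n) x : x < n -> pf p x < n.
Proof. by move=> h; rewrite (pf_lt p h). Qed.

Lemma pf_blk n C x : x < n -> pf (@blk n C) x = bf C x.
Proof. by move=> h; rewrite (pf_lt _ h) blkE. Qed.

Lemma cutb_in n C (c : 'I_n.-1) : cutb C c = (c \in C).
Proof.
rewrite /cutb; have h : c.+1 < n by have := ltn_ord c; lia.
rewrite leqNgt h /=; apply/existsP/idP => [[x /andP[xc /eqP e]]|cc].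
  by rewrite -(val_inj e).
by exists c; rewrite cc eqxx.
Qed.

Lemma cutbE n (p : 'S_n) c : c.+1 < n -> cutb (cuts p) c = (pf p c <= c) && (c < pf p c.+1).
Proof.
move=> h; have h' : c < n.-1 by lia.
by rewrite -[c]/(val (Ordinal h')) cutb_in inE.
Qed.

Lemma cuts_blk n C : cuts (@blk n C) = C.
Proof.
apply/setP => c; rewrite inE.
have cn : c.+1 < n by have := ltn_ord c; lia.
rewrite !pf_blk //; last by lia.
rewrite -cutb_in.
have g1 := en_ge C c; have g2 := en_ge C c.+1.
have s1 := st_le C c; have s2 := st_le C c.+1.
case E: (cutb C c).
  have e1 : en C c = c by apply/eqP; rewrite eqn_leq en_min.
  have e2 : st C c.+1 = c.+1 by rewrite /= E.
  rewrite /bf e1 e2; apply/andP; split; lia.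
have e3 : c < en C c.
  case: (ltngtP c (en C c)) g1 => // eq _.
  by move: (en_cut C c); rewrite -eq E.
have [e4 e5] := @blk_same n C c c.+1 ltac:(lia) e3.
rewrite /bf e4 e5; apply/negP => /andP[]; lia.
Qed.

Lemma Rb_blk n C : Rb (@blk n C).
Proof.
apply/forallP => i; apply/forallP => j; apply/implyP => H; rewrite !blkE.
have [r1 r2] := bf_range C i.
have s1 := st_le C i; have g1 := en_ge C i.
have [e1 e2] : st C j = st C i /\ en C j = en C i.
  apply: blk_same; move: H; rewrite blkE; nlia.
move: H; rewrite blkE /bf e1 e2 => H; apply/eqP; nlia.
Qed.

Lemma RPf n (p : 'S_n) (Rp : Rb p) i j : i < n -> j < n ->
  (i <= j /\ j <= pf p i) \/ (pf p i <= j /\ j <= i) -> pf p j + j = i + pf p i.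
Proof.
move=> hi hj; rewrite (pf_lt p hi) (pf_lt p hj) => H.
exact: (RP' Rp (Ordinal hi) (Ordinal hj) H).
Qed.

Lemma blk_cuts n (p : 'S_n) : Rb p -> blk (cuts p) = p.
Proof.
move=> Rp; apply/permP => o; apply: val_inj; rewrite /= blkE.
set C := cuts p.
have on := ltn_ord o.
have claim1 : forall c, c.+1 < n -> ~~ cutb C c -> pf p c.+1 + 1 = pf p c.
  move=> c cn; rewrite cutbE // => nc.
  have h1 := @RPf n p Rp c c.+1 ltac:(lia) cn.
  have h2 := @RPf n p Rp c.+1 c cn ltac:(lia).
  have h3 := pf_ltn p cn.
  move: nc; case: leqP => /= a; case: ltnP => /= b; lia.
set S := st C o. set E := en C o.
have SE : S <= o <= E by rewrite st_le en_ge.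
have En : E < n by exact: en_lt.
have inv : forall d, S + d <= E -> pf p (S + d) + (S + d) = pf p S + S.
  elim=> [|d IH] h; first by rewrite addn0.
  have nc := @blk_nocut n C o (S + d) ltac:(lia) ltac:(lia).
  have := claim1 (S + d) ltac:(lia) nc. have := IH ltac:(lia).
  have -> : S + d.+1 = (S + d).+1 by lia. lia.
have iE := inv (E - S) ltac:(lia). rewrite (_ : S + (E - S) = E) in iE; last by lia.
have io := inv (o - S) ltac:(lia). rewrite (_ : S + (o - S) = o) in io; last by lia.
have cE : E.+1 < n -> pf p E <= E /\ E < pf p E.+1.
  move=> h; have := en_cut C o; rewrite -/E cutbE // => /andP[]; done.
have cS : 0 < S -> pf p S.-1 <= S.-1 /\ S.-1 < pf p S.
  move=> h; case: (st_start C o) => [|]; rewrite -/S; first by lia.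
  rewrite cutbE; last by lia.
  by rewrite (_ : S.-1.+1 = S); [case/andP|lia].
have b1 := @RPf n p Rp S E.+1 ltac:(lia).
have b2 : 0 < S -> (pf p E <= S.-1 /\ S.-1 <= E) -> pf p S.-1 + S.-1 = E + pf p E.
  move=> h H; apply: RPf => //; lia.
have pS := pf_ltn p (ltac:(lia) : S < n).
have pE := pf_ltn p En.
rewrite -(pfE p o) /bf -/S -/E.
have Hpf : forall x, x = o -> pf p x = pf p o by move=> x ->.
move: io; nlia.
Qed.

Unset Implicit Arguments. Set Strict Implicit. Set Printing Implicit Defensive.

Theorem theorem4p6 (n : nat) (hn : (1 <= n)%N) :
  #|[set p : 'S_n | [&& shallow p, avoids p pat231 & involution p]]| = (2 ^ n.-1)%N
  /\ (forall p : 'S_n, avoids p pat231 -> involution p -> shallow p).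
Proof.
split; last by move=> p av inv; apply: shallow_R; exact: avinv_R.
have -> : [set p : 'S_n | [&& shallow p, avoids p pat231 & involution p]]
          = (@blk n) @: [set: {set 'I_n.-1}].
  apply/setP => p; rewrite inE; apply/idP/imsetP.
    case/and3P => _ av inv; exists (cuts p) => //.
    by rewrite blk_cuts //; exact: avinv_R.
  case=> C _ ->; have R := Rb_blk C.
  by rewrite shallow_R // R_avoid // R_invol.
rewrite card_imset; last exact: (can_inj (@cuts_blk n)).
by rewrite -powersetT card_powerset cardsT card_ord.
Qed.
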